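(* Let $G$ be the corresponding graph of an array $A$ with reach one and let $F$ be a resulting DFS forest of $G$. Let $H=F$ if all components of $F$ are directed paths; otherwise let $H$ be the graph obtained by merging the sub-trees of $F$. Let $H_1$ and $H_2$ be two distinct components of $H$, and apply the component merge to $H_1$ and $H_2$. Then the resulting graph contains a directed Hamiltonian path of the merged component, i.e. a directed path visiting every vertex of $V(H_1)\cup V(H_2)$ exactly once.
   Context: An array is a finite sequence $A=(A[1],\dots,A[n])$ of pairwise distinct real numbers. The corresponding graph of $A$ with reach one is the directed graph on $\{1,\dots,n\}$ with an arc $(i,j)$ whenever $j\equiv i\pm1\pmod n$, $j\ne i$, and $A[i]<A[j]$. DFS is run with adjacency lists sorted in increasing $A$-value and a visiting list containing all vertices; the resulting DFS forest consists of the arcs $(\mathrm{parent}(w),w)$ along which DFS discovers vertices; components are components of the underlying undirected graph, each a rooted tree. Merging the sub-trees of $F$: for each component of $F$ whose root has exactly two children $a_1,b_1$, set $p=a_1$, $q=b_1$ and, while both are defined: if $A[p]<A[q]$ add the arc $(p,q)$ and replace $p$ by its smallest-valued child in $F$ (undefined if none); otherwise add the arc $(q,p)$ and replace $q$ by its smallest-valued child in $F$ (undefined if none). Component merge of two distinct components $C,D$: set $p,q$ to the minimum-valued vertices of $C,D$; while both are defined: if $A[p]<A[q]$ add the arc $(p,q)$ and replace $p$ by the smallest-valued out-neighbour of $p$ within $C$ (ignoring arcs added during this merge; undefined if none); otherwise add $(q,p)$ and replace $q$ analogously within $D$. *)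

(* Defs.v *)
(* Vertices of an array of length n are 'I_n (0-based). *)
From HB Require Import structures.
From mathcomp Require Import all_boot all_order all_algebra.
From mathcomp Require Import reals.
Set Implicit Arguments. Unset Strict Implicit. Unset Printing Implicit Defensive.
Import Order.TTheory GRing.Theory Num.Theory.
Local Open Scope ring_scope.

Definition arcrel (T : eqType) (E : seq (T * T)) : rel T := fun x y => (x, y) \in E.
Definition symarc (T : eqType) (E : seq (T * T)) : rel T :=
  fun x y => arcrel E x y || arcrel E y x.

Section ArrayGraphs.
Variables (R : realType) (n : nat) (A : 'I_n -> R).
Local Notation V := 'I_n.

Definition reach1_arc (i j : V) : bool :=
  [&& j != i, (val j == (val i).+1 %% n)%N || (val i == (val j).+1 %% n)%N
    & A i < A j].

Definition sort_by_val (s : seq V) : seq V := sort (fun a b : V => A a <= A b) s.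
Definition min_by_val (s : seq V) : option V := ohead (sort_by_val s).

Definition adj (v : V) : seq V := sort_by_val [seq w <- enum V | reach1_arc v w].

(* DFS visit from v; returns (visited vertices, discovery arcs (parent w, w)) *)
Fixpoint dfs_visit (fuel : nat) (vis : seq V) (v : V) : seq V * seq (V * V) :=
  match fuel with
  | 0 => (vis, [::])
  | f.+1 =>
    foldl (fun (st : seq V * seq (V * V)) w =>
             if w \in st.1 then st
             else let r := dfs_visit f st.1 w in (r.1, st.2 ++ (v, w) :: r.2))
          (v :: vis, [::]) (adj v)
  end.

Definition dfs_forest (order : seq V) : seq (V * V) :=
  (foldl (fun (st : seq V * seq (V * V)) v =>
            if v \in st.1 then st
            else let r := dfs_visit n.+1 st.1 v in (r.1, st.2 ++ r.2))
         ([::], [::]) order).2.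

(* the two-pointer merging loop shared by both merge procedures *)
Fixpoint zigzag (nextp nextq : V -> option V) (fuel : nat) (p q : V)
  : seq (V * V) :=
  match fuel with
  | 0 => [::]
  | f.+1 =>
    if A p < A q then
      (p, q) :: (if nextp p is Some p' then zigzag nextp nextq f p' q else [::])
    else
      (q, p) :: (if nextq q is Some q' then zigzag nextp nextq f p q' else [::])
  end.

Definition children (F : seq (V * V)) (v : V) : seq V :=
  [seq w <- enum V | arcrel F v w].
Definition is_root (F : seq (V * V)) (r : V) : bool :=
  ~~ has (fun e : V * V => e.2 == r) F.

Definition merge_subtrees (F : seq (V * V)) : seq (V * V) :=
  let nxt := fun v => min_by_val (children F v) in
  F ++ flatten [seq match children F r with
                    | [:: a; b] => zigzag nxt nxt n a b
                    | _ => [::] end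
               | r <- enum V & is_root F r].

Definition comp_merge_arcs (H : seq (V * V)) (C D : {set V}) : seq (V * V) :=
  let nextC := fun v => min_by_val [seq w <- enum V | arcrel H v w & w \in C] in
  let nextD := fun v => min_by_val [seq w <- enum V | arcrel H v w & w \in D] in
  match min_by_val (enum C), min_by_val (enum D) with
  | Some p, Some q => zigzag nextC nextD n p q
  | _, _ => [::]
  end.

End ArrayGraphs.

Section Components.
Variable n : nat.
Local Notation V := 'I_n.

Definition comp_of (E : seq (V * V)) (x : V) : {set V} :=
  [set y | connect (symarc E) x y].
Definition is_component (E : seq (V * V)) (C : {set V}) : Prop :=
  exists x, C = comp_of E x.

Definition comp_is_dipath (E : seq (V * V)) (C : {set V}) : Prop :=
  exists s : seq V,
    [/\ uniq s, forall x, (x \in s) = (x \in C)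
      & forall x y, x \in C -> arcrel E x y = ((x, y) \in zip s (behead s))].

Definition all_comps_dipaths (E : seq (V * V)) : Prop :=
  forall C, is_component E C -> comp_is_dipath E C.
End Components.

(* Main.v *)
Require Import Defs.
From HB Require Import structures.
From mathcomp Require Import all_boot all_order all_algebra.
From mathcomp Require Import reals zify.
From Stdlib Require Import Classical.
Import Order.TTheory GRing.Theory Num.Theory.
Local Open Scope ring_scope.

Set Implicit Arguments. Unset Strict Implicit.
Section Generic.
Variables (R : realType) (n : nat) (A : 'I_n -> R).
Hypothesis Ainj : injective A.
Local Notation V := 'I_n.

Definition ltA : rel V := fun x y => A x < A y.
Definition leA : rel V := fun x y => A x <= A y.

Lemma ltA_trans : transitive ltA.
Proof. by move=> y x z; rewrite /ltA; apply: lt_trans. Qed.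

Lemma leA_trans : transitive leA.
Proof. by move=> y x z; rewrite /leA; apply: le_trans. Qed.

Lemma min_by_val_spec (s : seq V) :
  match min_by_val A s with
  | None => s = [::]
  | Some m => m \in s /\ forall y, y \in s -> A m <= A y
  end.
Proof.
rewrite /min_by_val /sort_by_val.
have hp : perm_eq (sort (fun a b : V => A a <= A b) s) s by rewrite perm_sort.
have hs : sorted (fun a b : V => A a <= A b) (sort (fun a b : V => A a <= A b) s).
  by apply: sort_sorted => a b; exact: le_total.
case E: (sort _ s) hs => [|h t] /= hs.
  by move: (perm_size hp); rewrite E; case: s {hp E}.
split; first by rewrite -(perm_mem hp) E mem_head.
move=> y; rewrite -(perm_mem hp) E inE => /predU1P [->//|yt].
have := order_path_min leA_trans hs => /allP /(_ _ yt); done.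
Qed.

Lemma min_by_valP (s : seq V) m : m \in s -> (forall y, y \in s -> A m <= A y) ->
  min_by_val A s = Some m.
Proof.
move=> ms hm; have := min_by_val_spec s.
case: (min_by_val A s) => [h [hs hh]|E]; last by rewrite E in ms.
congr Some; apply: Ainj; apply/eqP; rewrite eq_le hh // hm //.
Qed.

Lemma min_by_val_mem (s : seq V) m : min_by_val A s = Some m -> m \in s.
Proof. by have := min_by_val_spec s => + E; rewrite E => -[]. Qed.

Fixpoint follows (nx : V -> option V) (x : V) (s : seq V) : Prop :=
  match s with
  | [::] => nx x = None
  | y :: s' => nx x = Some y /\ follows nx y s'
  end.

Lemma follows_next nx x s u c : follows nx x s -> u \in x :: s -> nx u = Some c -> c \in s.
Proof.
elim: s x => [|y s IH] x /=.
  by move=> hn; rewrite inE => /eqP -> ; rewrite hn.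
move=> [hx hf]; rewrite inE => /predU1P [->|us] hu.
  by move: hu; rewrite hx => -[->]; rewrite mem_head.
by rewrite inE (IH y hf us hu) orbT.
Qed.

Lemma zig_main (E : rel V) nxp nxq : forall f p s q t,
  follows nxp p s -> follows nxq q t -> path E p s -> path E q t ->
  (size s + size t < f)%N ->
  exists u, perm_eq ((if A p < A q then p else q) :: u) (p :: s ++ q :: t) /\
    path (fun x y => E x y || arcrel (zigzag A nxp nxq f p q) x y)
      (if A p < A q then p else q) u.
Proof.
elim=> [|f IH] p s q t fp fq ep eq_ hf //.
rewrite [zigzag _ _ _ _ _ _]/=.
case: ifP => hpq.
- case: s fp ep hf => [|y s] /= fp ep hf.
  + rewrite fp; exists (q :: t); split => //=.
    rewrite /arcrel mem_head orbT /=.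
    by apply: sub_path eq_ => x z ->.
  + case: fp => fp1 fp2; rewrite fp1.
    case/andP: ep => ep1 ep2.
    have [u [hu1 hu2]] := IH y s q t fp2 fq ep2 eq_ (leq_trans (ltnSn _) hf).
    exists ((if A y < A q then y else q) :: u); split.
      by rewrite perm_cons.
    rewrite /= ; apply/andP; split.
      case: ifP => _; first by rewrite ep1.
      by rewrite /arcrel mem_head orbT.
    apply: sub_path hu2 => x z /orP [->//|h]; apply/orP; right.
    by move: h; rewrite /arcrel inE => ->; rewrite orbT.
- case: t fq eq_ hf => [|z t] /= fq eq_ hf.
  + rewrite fq; exists (p :: s); split => //=.
      by rewrite cats1 -rcons_cons perm_sym perm_rcons.
    rewrite /arcrel mem_head orbT /=.
    by apply: sub_path ep => x w ->.
  + case: fq => fq1 fq2; rewrite fq1.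
    case/andP: eq_ => eq1 eq2.
    have hf' : (size s + size t < f)%N by rewrite addnS in hf.
    have [u [hu1 hu2]] := IH p s z t fp fq2 ep eq2 hf'.
    exists ((if A p < A z then p else z) :: u); split.
      rewrite perm_sym -cat_cons -[q :: z :: t]cat1s perm_catCA /= perm_cons.
      by rewrite perm_sym.
    rewrite /= ; apply/andP; split.
      case: ifP => _; last by rewrite eq1.
      by rewrite /arcrel mem_head orbT.
    apply: sub_path hu2 => x w /orP [->//|h]; apply/orP; right.
    by move: h; rewrite /arcrel inE => ->; rewrite orbT.
Qed.

Lemma zig_side nxp nxq : forall f p s q t,
  follows nxp p s -> follows nxq q t ->
  forall e, e \in zigzag A nxp nxq f p q ->
  exists x y, [/\ x \in p :: s, y \in q :: t &
     (e = (x, y) /\ A x < A y) \/ (e = (y, x) /\ ~~ (A x < A y))].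
Proof.
elim=> [|f IH] p s q t fp fq e //=.
case: ifP => hpq; rewrite inE => /predU1P [->|he].
- by exists p, q; rewrite !mem_head; split => //; left.
- case: s fp he => [|y s] /= fp; first by rewrite fp.
  case: fp => fp1 fp2; rewrite fp1 => he.
  have [x [w [hx hw hh]]] := IH y s q t fp2 fq e he.
  by exists x, w; split => //; rewrite inE hx orbT.
- by exists p, q; rewrite !mem_head hpq; split => //; right.
- case: t fq he => [|z t] /= fq; first by rewrite fq.
  case: fq => fq1 fq2; rewrite fq1 => he.
  have [x [w [hx hw hh]]] := IH p s z t fp fq2 e he.
  by exists x, w; split => //; rewrite inE hw orbT.
Qed.

End Generic.

Set Implicit Arguments. Unset Strict Implicit.
Section DFS.
Variables (R : realType) (n : nat) (A : 'I_n -> R).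
Local Notation V := 'I_n.

Definition tgt_ok (vis0 vis' : seq V) (E : seq (V * V)) :=
  [/\ uniq (map snd E),
      forall e, e \in E -> (e.2 \notin vis0) && (e.2 \in vis')
    & forall e, e \in E -> reach1_arc A e.1 e.2].

Lemma card_up_lt (v w : V) : A v < A w ->
  (#|[set u | (A w < A u)%R]| < #|[set u | (A v < A u)%R]|)%N.
Proof.
move=> hvw; apply: proper_card; apply/properP; split.
  by apply/subsetP => u; rewrite !inE => h; apply: lt_trans h.
by exists w; rewrite !inE ?hvw ?ltxx.
Qed.

Lemma dfs_visit_ok f : forall vis v, (#|[set u | (A v < A u)%R]| < f)%N ->
  {subset v :: vis <= (dfs_visit A f vis v).1} /\
  tgt_ok (v :: vis) (dfs_visit A f vis v).1 (dfs_visit A f vis v).2.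
Proof.
elim: f => [|f IH] vis v hf //.
rewrite [dfs_visit _ _ _ _]/=.
set step := fun (st : seq V * seq (V * V)) w => _.
suff : forall l (st : seq V * seq (V * V)), (forall w, w \in l -> w \in adj A v) ->
  {subset v :: vis <= st.1} -> tgt_ok (v :: vis) st.1 st.2 ->
  {subset v :: vis <= (foldl step st l).1} /\
  tgt_ok (v :: vis) (foldl step st l).1 (foldl step st l).2.
  move=> /(_ (adj A v) (v :: vis, [::])) H; apply: H => //.
elim=> [|w l IHl] st hl hsub hok /=; first by split.
apply: IHl; first by move=> x hx; apply: hl; rewrite inE hx orbT.
- rewrite /step; case: ifP => // hw /=.
  have hvw : A v < A w.
    have := hl w (mem_head _ _); rewrite /adj /sort_by_val mem_sort mem_filter.
    by case/andP => /and3P [].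
  have hf' : (#|[set u | (A w < A u)%R]| < f)%N.
    by rewrite -ltnS; apply: leq_trans hf; apply: card_up_lt.
  have [h1 _] := IH st.1 w hf'.
  by move=> x /hsub hx; apply: h1; rewrite inE hx orbT.
- rewrite /step; case: ifP => // hw /=.
  have hvw : reach1_arc A v w.
    have := hl w (mem_head _ _); rewrite /adj /sort_by_val mem_sort mem_filter.
    by case/andP.
  have hf' : (#|[set u | (A w < A u)%R]| < f)%N.
    rewrite -ltnS; apply: leq_trans hf; apply: card_up_lt.
    by case/and3P: hvw.
  have [h1 [r1 r2 r3]] := IH st.1 w hf'.
  case: hok => o1 o2 o3.
  set r := dfs_visit A f st.1 w in h1 r1 r2 r3 *.
  split.
  + rewrite map_cat /= cat_uniq o1 /= r1 andbT; apply/andP; split.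
      rewrite negb_or; apply/andP; split.
        apply/negP => /mapP [e he hwe]. by have := o2 e he; rewrite -hwe hw andbF.
      apply/hasPn => x /mapP [e he ->]; apply/negP => /mapP [e' he' he'e].
      have := o2 e' he'; have := r2 e he; rewrite inE he'e.
      by case/andP => /norP [_ /negP h] _ /andP [_ /h].
    apply/negP => /mapP [e he hwe]; have := r2 e he.
    by rewrite -hwe inE eqxx.
  + move=> e; rewrite mem_cat inE => /or3P [he|/eqP ->|he] /=.
    * have /andP [-> h] := o2 e he; rewrite andTb.
      by apply: h1; rewrite inE h orbT.
    * apply/andP; split; last by apply: h1; rewrite mem_head.
      by apply/negP => /hsub; rewrite hw.
    * have /andP [h h'] := r2 e he; rewrite h' andbT.
      apply/negP => /hsub hh; move: h; rewrite inE hh orbT //.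
  + move=> e; rewrite mem_cat inE => /or3P [he|/eqP ->|he] //.
    * exact: o3.
    * exact: r3.
Qed.

Lemma dfs_forest_ok order :
  uniq (map snd (dfs_forest A order)) /\
  forall e, e \in dfs_forest A order -> reach1_arc A e.1 e.2.
Proof.
rewrite /dfs_forest.
set step := fun (st : seq V * seq (V * V)) v => _.
suff : forall l (st : seq V * seq (V * V)),
  uniq (map snd st.2) -> (forall e, e \in st.2 -> (e.2 \in st.1) && reach1_arc A e.1 e.2) ->
  uniq (map snd (foldl step st l).2) /\
  (forall e, e \in (foldl step st l).2 -> (e.2 \in (foldl step st l).1) && reach1_arc A e.1 e.2).
  move=> /(_ order ([::], [::]) isT) [//|h1 h2]; split => // e /h2 /andP [] //.
elim=> [|v l IHl] st hu hr //=.
apply: IHl; rewrite /step; case: ifP => // hv /=.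
- have hf : (#|[set u | (A v < A u)%R]| < n.+1)%N.
    by rewrite ltnS; apply: leq_trans (max_card _) _; rewrite card_ord.
  have [h1 [r1 r2 r3]] := @dfs_visit_ok n.+1 st.1 v hf.
  rewrite map_cat cat_uniq hu r1 andbT /=.
  apply/hasPn => x /mapP [e he ->]; apply/negP => /mapP [e' he' he'e].
  have /andP [h _] := hr e' he'; rewrite -he'e in h.
  by have := r2 e he; rewrite inE h orbT.
- have hf : (#|[set u | (A v < A u)%R]| < n.+1)%N.
    by rewrite ltnS; apply: leq_trans (max_card _) _; rewrite card_ord.
  have [h1 [r1 r2 r3]] := @dfs_visit_ok n.+1 st.1 v hf.
  move=> e; rewrite mem_cat => /orP [he|he].
    have /andP [h ->] := hr e he; rewrite andbT.
    by apply: h1; rewrite inE h orbT.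
  by have /andP [_ ->] := r2 e he; rewrite r3.
Qed.

End DFS.

Set Implicit Arguments. Unset Strict Implicit.
Section Graph.
Variables (R : realType) (n : nat) (A : 'I_n -> R).
Hypothesis Ainj : injective A.
Local Notation V := 'I_n.

Definition nb (w x : V) : bool :=
  (val x == (val w).+1 %% n)%N || (val w == (val x).+1 %% n)%N.

Lemma t2 (x y : V) : ((val x).+1 %% n = (val y).+1 %% n)%N -> x = y.
Proof.
have e (z : V) : ((val z).+1 %% n = if (val z).+1 == n then 0 else (val z).+1)%N.
  case: eqP => [->|ne]; first by rewrite modnn.
  by rewrite modn_small // ltn_neqAle (introF eqP ne) ltn_ord.
rewrite !e => h; apply: val_inj; move: h.
by case: eqP; case: eqP => /= h1 h2; lia.
Qed.

Lemma nb3 w x y z : nb w x -> nb w y -> nb w z -> x = y \/ x = z \/ y = z.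
Proof.
rewrite /nb.
case/orP => /eqP hx; case/orP => /eqP hy; case/orP => /eqP hz.
all: first [ left; apply: val_inj; congruence | left; apply: t2; congruence
           | right; left; apply: val_inj; congruence | right; left; apply: t2; congruence
           | right; right; apply: val_inj; congruence | right; right; apply: t2; congruence ].
Qed.

Lemma reach1_nb_l u w : reach1_arc A u w -> nb w u.
Proof. by case/and3P => _ h _; rewrite /nb orbC. Qed.

Lemma reach1_nb_r w c : reach1_arc A w c -> nb w c.
Proof. by case/and3P. Qed.

Lemma reach1_lt u w : reach1_arc A u w -> A u < A w.
Proof. by case/and3P. Qed.

Fixpoint chain (nx : V -> option V) (k : nat) (v : V) : seq V :=
  match k with
  | 0 => [::]
  | k'.+1 => if nx v is Some c then c :: chain nx k' c else [::]
  end.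

Lemma parent_in_path (e : rel V) x s z : path e x s -> z \in s ->
  exists2 p, p \in x :: s & e p z.
Proof.
elim: s x => [|y s IH] x //=; case/andP => hxy hp; rewrite inE => /predU1P [->|hz].
  by exists x; rewrite ?mem_head.
have [p hp1 hp2] := IH y hp hz; exists p => //; by rewrite inE hp1 orbT.
Qed.

Lemma connect_path (e : rel V) x s z : path e x s -> z \in x :: s -> connect e x z.
Proof.
elim: s x => [|y s IH] x /=; first by move=> _; rewrite inE => /eqP ->.
case/andP => hxy hp; rewrite inE => /predU1P [->//|hz].
by apply: connect_trans (connect1 hxy) (IH y hp hz).
Qed.

Lemma closed_connect (e : rel V) (S : pred V) x y :
  (forall u w, S u -> e u w -> S w) -> S x -> connect e x y -> S y.
Proof.
move=> hc hx /connectP [p hp ->]; elim: p x hx hp => [|z p IH] x hx //= /andP [h1 h2].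
exact: IH (hc _ _ hx h1) h2.
Qed.

Lemma symarc_sym (E : seq (V * V)) : symmetric (symarc E).
Proof. by move=> x y; rewrite /symarc orbC. Qed.

Lemma zip_path (e : rel V) x s :
  (forall a b, a \in x :: s -> (a, b) \in zip (x :: s) s -> e a b) -> path e x s.
Proof.
elim: s x => [|y s IH] x //= h; apply/andP; split.
  by apply: h; rewrite ?mem_head.
apply: IH => a b ha hab; apply: h; first by rewrite inE ha orbT.
by rewrite inE hab orbT.
Qed.

Section Forest.
Variable F : seq (V * V).
Hypothesis hFr : forall {u w}, arcrel F u w -> reach1_arc A u w.
Hypothesis hFu : forall {u u' w}, arcrel F u w -> arcrel F u' w -> u = u'.

Lemma F_lt u w : arcrel F u w -> A u < A w.
Proof. by move/hFr/reach1_lt. Qed.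

Lemma mem_children v w : (w \in children F v) = arcrel F v w.
Proof. by rewrite /children mem_filter mem_enum andbT. Qed.

Lemma uniq_children v : uniq (children F v).
Proof. exact/filter_uniq/enum_uniq. Qed.

Lemma one_child u w c1 c2 : arcrel F u w -> arcrel F w c1 -> arcrel F w c2 -> c1 = c2.
Proof.
move=> h0 h1 h2.
have [e1|[e2|//]] := nb3 (reach1_nb_l (hFr h0)) (reach1_nb_r (hFr h1)) (reach1_nb_r (hFr h2)).
- have := lt_trans (F_lt h0) (F_lt h1); by rewrite e1 ltxx.
- have := lt_trans (F_lt h0) (F_lt h2); by rewrite e2 ltxx.
Qed.

Lemma three_children r a b c l : children F r = [:: a, b, c & l] -> False.
Proof.
move=> E; have hu := uniq_children r; rewrite E in hu.
have ha : arcrel F r a by rewrite -mem_children E mem_head.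
have hb : arcrel F r b by rewrite -mem_children E !inE eqxx orbT.
have hc : arcrel F r c by rewrite -mem_children E !inE eqxx !orbT.
move: hu => /= /andP [/norP [hab /norP [hac _]] /andP [/norP [hbc _] _]].
have [e|[e|e]] := nb3 (reach1_nb_r (hFr ha)) (reach1_nb_r (hFr hb)) (reach1_nb_r (hFr hc)).
- by rewrite e eqxx in hab.
- by rewrite e eqxx in hac.
- by rewrite e eqxx in hbc.
Qed.

Definition nxF (v : V) := min_by_val A (children F v).

Lemma nx_arc v c : nxF v = Some c -> arcrel F v c.
Proof. by move/min_by_val_mem; rewrite mem_children. Qed.

Local Notation chn := (chain nxF n).

Lemma chain_path k v : path (arcrel F) v (chain nxF k v).
Proof.
elim: k v => [|k IH] v //=; case E: (nxF v) => [c|] //=.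
by rewrite (nx_arc E) IH.
Qed.

Lemma chain_lt k v : path (ltA A) v (chain nxF k v).
Proof. by apply: sub_path (chain_path k v) => x y /F_lt. Qed.

Lemma chain_follows_or k v :
  follows nxF v (chain nxF k v) \/ size (chain nxF k v) = k.
Proof.
elim: k v => [|k IH] v /=; first by right.
case E: (nxF v) => [c|] /=; last by left.
by case: (IH c) => h; [left | right; rewrite h].
Qed.

Lemma uniq_size_le (s : seq V) : uniq s -> (size s <= n)%N.
Proof.
by move/card_uniqP <-; apply: leq_trans (max_card _) _; rewrite card_ord.
Qed.

Lemma ltA_irr : irreflexive (ltA A).
Proof. by move=> x; rewrite /ltA ltxx. Qed.

Lemma chain_uniq v : uniq (v :: chn v).
Proof.
apply: (@sorted_uniq _ (ltA A)); [exact: ltA_trans | exact: ltA_irr | exact: chain_lt].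
Qed.

Lemma chain_follows v : follows nxF v (chn v).
Proof.
case: (chain_follows_or n v) => // hs.
have := uniq_size_le (chain_uniq v); by rewrite /= hs ltnn.
Qed.

Definition noparent r := forall u, ~~ arcrel F u r.

Lemma root_notin r a : arcrel F r a -> noparent r -> r \notin a :: chn a.
Proof.
move=> hra hr; rewrite inE; apply/norP; split.
  by apply/eqP => e; move: (F_lt hra); rewrite e ltxx.
apply/negP => /(parent_in_path (chain_path n a)) [p _ hp].
by move: (hr p); rewrite hp.
Qed.

Lemma parent_or a z : z \in a :: chn a -> z = a \/ exists2 p, p \in a :: chn a & arcrel F p z.
Proof.
rewrite inE => /predU1P [->|hz]; first by left.
by right; apply: parent_in_path (chain_path n a) hz.
Qed.

Lemma chains_disj r a b : arcrel F r a -> arcrel F r b -> a != b -> noparent r ->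
  forall z, z \in a :: chn a -> z \in b :: chn b -> False.
Proof.
move=> hra hrb hab hr z hza hzb.
set L := [seq x <- a :: chn a | x \in b :: chn b].
have := min_by_val_spec A L.
case: (min_by_val A L) => [m [hm hmin]|E]; last first.
  have : z \in L by rewrite mem_filter hzb hza.
  by rewrite E.
move: hm; rewrite mem_filter => /andP [hmb hma].
have [ea|[p hp1 hp2]] := parent_or hma; have [eb|[q hq1 hq2]] := parent_or hmb.
- by move: hab; rewrite -ea -eb eqxx.
- have e := hFu hq2 (eq_ind_r (fun x => arcrel F r x) hra ea).
  by move: (root_notin hrb hr); rewrite -e hq1.
- have e := hFu hp2 (eq_ind_r (fun x => arcrel F r x) hrb eb).
  by move: (root_notin hra hr); rewrite -e hp1.
- have e := hFu hp2 hq2; subst q.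
  have : p \in L by rewrite mem_filter hp1 hq1.
  move/hmin; rewrite leNgt; by rewrite (F_lt hp2).
Qed.

Local Notation H := (merge_subtrees A F).

Definition is_root2 r a b := [/\ ~~ has (fun e : V * V => e.2 == r) F & children F r = [:: a; b]].

Lemma H_cases u w : arcrel H u w -> arcrel F u w \/
  exists r a b, is_root2 r a b /\ (u, w) \in zigzag A nxF nxF n a b.
Proof.
rewrite /arcrel /merge_subtrees mem_cat => /orP [->|]; first by left.
case/flattenP => es /mapP [r hr ->] hin; right.
move: hr; rewrite mem_filter => /andP [hroot _].
case E: (children F r) hin => [|a [|b [|c l]]] //= hin.
by exists r, a, b; split.
Qed.

Lemma root2_facts r a b : is_root2 r a b ->
  [/\ arcrel F r a, arcrel F r b, a != b & noparent r].
Proof.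
case=> hr E; have hu := uniq_children r; rewrite E /= inE andbT in hu.
split => //; try by rewrite -mem_children E !inE eqxx ?orbT.
move=> u; apply/negP => hur; move/hasP: hr; apply; exists (u, r) => //=.
Qed.

Lemma H_inc u w : arcrel H u w -> A u < A w.
Proof.
case/H_cases => [/F_lt //|[r [a [b [hr hin]]]]].
have [hra hrb hab hnp] := root2_facts hr.
have [x [y [hx hy [[e hxy]|[e hxy]]]]] :=
  zig_side (chain_follows a) (chain_follows b) hin; case: e => -> ->//.
have hne : y != x by apply/eqP => e; apply: (chains_disj hra hrb hab hnp hx); rewrite -e.
by rewrite lt_neqAle (inj_eq Ainj) hne /= leNgt.
Qed.

Lemma H_sub u w : arcrel H u w -> connect (symarc F) u w.
Proof.
case/H_cases => [h|[r [a [b [hr hin]]]]].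
  by apply: connect1; rewrite /symarc h.
have [hra hrb hab hnp] := root2_facts hr.
have hsym := sym_connect_sym (symarc_sym F).
have hpa : path (symarc F) r (a :: chn a).
  by apply: (@sub_path _ (arcrel F)); [move=> x y h; rewrite /symarc h | rewrite /= hra chain_path].
have hpb : path (symarc F) r (b :: chn b).
  by apply: (@sub_path _ (arcrel F)); [move=> x y h; rewrite /symarc h | rewrite /= hrb chain_path].
have [x [y [hx hy [[e _]|[e _]]]]] :=
  zig_side (chain_follows a) (chain_follows b) hin; case: e => -> ->.
- have cx : connect (symarc F) r x by apply: connect_path hpa _; rewrite inE hx orbT.
  have cy : connect (symarc F) r y by apply: connect_path hpb _; rewrite inE hy orbT.
  by rewrite hsym in cx; apply: connect_trans cx cy.
- have cx : connect (symarc F) r x by apply: connect_path hpa _; rewrite inE hx orbT.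
  have cy : connect (symarc F) r y by apply: connect_path hpb _; rewrite inE hy orbT.
  by rewrite hsym in cy; apply: connect_trans cy cx.
Qed.


Lemma F_sub_H u w : arcrel F u w -> arcrel H u w.
Proof. by rewrite /arcrel /merge_subtrees mem_cat => ->. Qed.

Lemma comp_chain_merged (y : V) : exists x0 s,
  path (arcrel H) x0 s /\ forall z, (z \in x0 :: s) = (z \in comp_of H y).
Proof.
set C := comp_of H y.
have hsymH := sym_connect_sym (symarc_sym H).
have hsymF := sym_connect_sym (symarc_sym F).
have inC z : (z \in C) = connect (symarc H) y z by rewrite inE.
have yC : y \in C by rewrite inC connect0.
have := min_by_val_spec A (enum C).
case: (min_by_val A (enum C)) => [r [hrC hrmin]|E]; last first.
  have : y \in enum C by rewrite mem_enum.
  by rewrite E.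
rewrite mem_enum in hrC.
have hnp : noparent r.
  move=> u; apply/negP => hur.
  have uC : u \in C.
    rewrite inC; apply: connect_trans (_ : connect _ y r) _; first by rewrite -inC.
    by apply: connect1; rewrite /symarc (F_sub_H hur) orbT.
  have := hrmin u; rewrite mem_enum uC => /(_ isT).
  by rewrite leNgt (F_lt hur).
set ch := children F r.
pose S z := (z == r) || has (fun a => z \in a :: chn a) ch.
have SinC z : S z -> z \in C.
  move=> hS; rewrite inC; apply: connect_trans (_ : connect _ y r) _; first by rewrite -inC.
  case/orP: hS => [/eqP ->|/hasP [a ha hz]]; first exact: connect0.
  have hp : path (symarc H) r (a :: chn a).
    apply: (@sub_path _ (arcrel F)).
      by move=> u w h; rewrite /symarc (F_sub_H h).
    by rewrite /= -mem_children ha chain_path.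
  by apply: connect_path hp _; rewrite inE hz orbT.
have fwd u w : S u -> arcrel F u w -> S w.
  case/orP => [/eqP ->|/hasP [a ha hu]] huw.
    by apply/orP; right; apply/hasP; exists w; rewrite ?mem_children ?mem_head.
  have [p hp] : exists p, arcrel F p u.
    case: (parent_or hu) => [->|[p _ hp]]; last by exists p.
    by exists r; rewrite -mem_children.
  have := min_by_val_spec A (children F u); rewrite -/(nxF u).
  case E: (nxF u) => [c|] /=; last first.
    by move=> hE; move: (huw); rewrite -mem_children hE.
  case=> hc _.
  rewrite mem_children in hc.
  have <- := one_child hp hc huw.
  have hc' := follows_next (chain_follows a) hu E.
  by apply/orP; right; apply/hasP; exists a => //; rewrite inE hc' orbT.
have bwd u w : S w -> arcrel F u w -> S u.
  case/orP => [/eqP ->|/hasP [a ha hw]] huw.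
    by move: (hnp u); rewrite huw.
  have hp : path (arcrel F) r (a :: chn a) by rewrite /= -mem_children ha chain_path.
  have [p hp1 hp2] := parent_in_path hp hw.
  rewrite (hFu huw hp2); move: hp1; rewrite inE => /predU1P [->|hp1].
    by rewrite /S eqxx.
  by apply/orP; right; apply/hasP; exists a.
have CinS z : z \in C -> S z.
  rewrite inC => hyz.
  have hrz : connect (symarc H) r z.
    apply: connect_trans _ hyz; rewrite hsymH -inC //.
  have hrzF : connect (symarc F) r z.
    apply: (connect_sub _ hrz) => u w /orP [h|h]; first exact: H_sub h.
    by rewrite hsymF; apply: H_sub h.
  apply: (closed_connect (e := symarc F)) hrzF; last by rewrite /S eqxx.
  by move=> u w hu /orP [h|h]; [apply: fwd hu h | apply: bwd hu h].
have memS z : (z \in C) = S z by apply/idP/idP; [apply: CinS | apply: SinC].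
case E: ch => [|a [|b [|c l]]].
- exists r, [::]; split => // z; rewrite memS /S E /= orbF.
  by rewrite inE.
- exists r, (a :: chn a); split.
    by rewrite /= F_sub_H ?(@sub_path _ (arcrel F) _ F_sub_H _ _ (chain_path n a)) // -mem_children -/ch E mem_head.
  move=> z; rewrite memS /S E /= orbF.
  by rewrite [z \in r :: _]in_cons.
- have hr2 : is_root2 r a b.
    split; last by rewrite -/ch E.
    apply/hasPn => e he0; apply/negP => /eqP he; move: (hnp e.1).
    by rewrite /arcrel -he -surjective_pairing he0.
  have [hra hrb hab _] := root2_facts hr2.
  have hdisj := chains_disj hra hrb hab hnp.
  have hsz : (size (chn a) + size (chn b) < n)%N.
    have hu : uniq ((a :: chn a) ++ (b :: chn b)).
      rewrite cat_uniq !chain_uniq andbT andTb.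
      by apply/hasPn => z hz; apply/negP => hz'; apply: hdisj hz' hz.
    have := uniq_size_le hu; rewrite size_cat /=; lia.
  have [u [hu1 hu2]] := zig_main A (chain_follows a) (chain_follows b)
    (chain_path n a) (chain_path n b) hsz.
  exists r, ((if A a < A b then a else b) :: u); split.
    rewrite /=; apply/andP; split; first by case: ifP => _; rewrite F_sub_H.
    apply: sub_path hu2 => x w /orP [h|h]; first exact: F_sub_H.
    rewrite /arcrel /merge_subtrees mem_cat; apply/orP; right.
    apply/flattenP; exists (zigzag A nxF nxF n a b) => //.
    apply/mapP; exists r; last by rewrite -/ch E.
    by rewrite mem_filter mem_enum andbT; case: hr2.
  move=> z; rewrite memS /S E /= orbF.
  by rewrite [z \in r :: _]in_cons (perm_mem hu1) -cat_cons mem_cat.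
- by case: (three_children E).
Qed.

End Forest.
End Graph.

Set Implicit Arguments. Unset Strict Implicit.
Section Final.
Variables (R : realType) (n : nat) (A : 'I_n -> R).
Hypothesis Ainj : injective A.
Local Notation V := 'I_n.

Lemma comp_chain_dipath (E : seq (V * V)) y : all_comps_dipaths E ->
  exists x0 s, path (arcrel E) x0 s /\ forall z, (z \in x0 :: s) = (z \in comp_of E y).
Proof.
move=> hall; have [s [hu hmem harc]] := hall (comp_of E y) (ex_intro _ y erefl).
case: s hu hmem harc => [|x0 s] hu hmem harc.
  by have := hmem y; rewrite inE connect0.
exists x0, s; split => //.
by apply: zip_path => a b ha hab; rewrite harc // -hmem.
Qed.

Definition nextIn (H : seq (V * V)) (C : {set V}) :=
  fun v => min_by_val A [seq w <- enum V | arcrel H v w & w \in C].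

Lemma foll (H : seq (V * V)) (C : {set V}) x s :
  (forall u w, arcrel H u w -> A u < A w) ->
  path (ltA A) x s -> path (arcrel H) x s ->
  (forall z, z \in x :: s -> z \in C) ->
  (forall w, w \in C -> A x < A w -> w \in s) ->
  follows (nextIn H C) x s.
Proof.
move=> hinc; elim: s x => [|y s IH] x /= hl hp hC hinv.
  have := min_by_val_spec A [seq w <- enum V | arcrel H x w & w \in C].
  rewrite -/(nextIn H C x); case: (nextIn H C x) => // m [].
  rewrite mem_filter mem_enum andbT => /andP [hxm hmC] _.
  by have := hinv m hmC (hinc _ _ hxm).
case/andP: hl => hxy hl; case/andP: hp => hpxy hp; split.
  apply: min_by_valP => //.
    have yC : y \in C by apply: hC; rewrite !inE eqxx orbT.
    by rewrite mem_filter mem_enum hpxy yC.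
  move=> w; rewrite mem_filter mem_enum andbT => /andP [hxw hwC].
  have := hinv w hwC (hinc _ _ hxw); rewrite inE => /predU1P [->//|hws].
  have := order_path_min (@ltA_trans _ _ A) hl => /allP /(_ _ hws) h.
  exact: ltW.
apply: IH => //.
  by move=> z hz; apply: hC; rewrite inE hz orbT.
move=> w hwC hyw; have := hinv w hwC (lt_trans hxy hyw).
rewrite inE => /predU1P [e|//]; by move: hyw; rewrite e ltxx.
Qed.

Lemma assemble (H : seq (V * V)) (C D : {set V}) x0 s y0 t :
  (forall u w, arcrel H u w -> A u < A w) ->
  path (arcrel H) x0 s -> path (arcrel H) y0 t ->
  (forall z, (z \in x0 :: s) = (z \in C)) -> (forall z, (z \in y0 :: t) = (z \in D)) ->
  (forall z, z \in C -> z \in D -> False) ->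
  exists (x : V) (u : seq V),
    [/\ uniq (x :: u),
        forall v, (v \in x :: u) = (v \in C :|: D)
      & path (arcrel (H ++ comp_merge_arcs A H C D)) x u].
Proof.
move=> hinc hs ht hC hD hdisj.
have hls : path (ltA A) x0 s by apply: sub_path hs => a b /hinc.
have hlt : path (ltA A) y0 t by apply: sub_path ht => a b /hinc.
have us : uniq (x0 :: s).
  by apply: (@sorted_uniq _ (ltA A)); [exact: ltA_trans | exact: ltA_irr | exact: hls].
have ut : uniq (y0 :: t).
  by apply: (@sorted_uniq _ (ltA A)); [exact: ltA_trans | exact: ltA_irr | exact: hlt].
have hmin (z0 : V) l (K : {set V}) : path (ltA A) z0 l -> (forall z, (z \in z0 :: l) = (z \in K)) ->
    min_by_val A (enum K) = Some z0.
  move=> hl hK; apply: min_by_valP => //; first by rewrite mem_enum -hK mem_head.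
  move=> z; rewrite mem_enum -hK inE => /predU1P [->//|hz].
  have := order_path_min (@ltA_trans _ _ A) hl => /allP /(_ _ hz) h; exact: ltW.
have hinv (z0 : V) l (K : {set V}) : path (ltA A) z0 l -> (forall z, (z \in z0 :: l) = (z \in K)) ->
    forall w, w \in K -> A z0 < A w -> w \in l.
  move=> hl hK w; rewrite -hK inE => /predU1P [->|//]; by rewrite ltxx.
have fC : follows (nextIn H C) x0 s.
  apply: foll => //; last exact: hinv hls hC.
  by move=> z; rewrite hC.
have fD : follows (nextIn H D) y0 t.
  apply: foll => //; last exact: hinv hlt hD.
  by move=> z; rewrite hD.
have -> : comp_merge_arcs A H C D = zigzag A (nextIn H C) (nextIn H D) n x0 y0.
  by rewrite /comp_merge_arcs (hmin _ _ _ hls hC) (hmin _ _ _ hlt hD).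
have hu : uniq ((x0 :: s) ++ (y0 :: t)).
  rewrite cat_uniq us ut andbT andTb; apply/hasPn => z hz; apply/negP => hz'.
  by apply: (hdisj z); [rewrite -hC | rewrite -hD].
have hsz : (size s + size t < n)%N.
  have := uniq_size_le hu; rewrite size_cat /=; lia.
have [u [hu1 hu2]] := zig_main A fC fD hs ht hsz.
exists (if A x0 < A y0 then x0 else y0), u; split.
- by rewrite (perm_uniq hu1).
- by move=> v; rewrite (perm_mem hu1) -cat_cons mem_cat hC hD in_setU.
- apply: sub_path hu2 => a b /orP [h|h]; rewrite /arcrel mem_cat; apply/orP.
    by left.
  by right.
Qed.

End Final.

Unset Implicit Arguments. Set Strict Implicit.

Theorem theorem10 (R : realType) (n : nat) (A : 'I_n -> R)
    (order : seq 'I_n) (H : seq ('I_n * 'I_n)) (C D : {set 'I_n}) :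
  injective A ->
  (forall v, v \in order) ->
  let F := dfs_forest A order in
  (all_comps_dipaths F -> H = F) ->
  (~ all_comps_dipaths F -> H = merge_subtrees A F) ->
  is_component H C -> is_component H D -> C != D ->
  exists (x : 'I_n) (s : seq 'I_n),
    [/\ uniq (x :: s),
        forall v, (v \in x :: s) = (v \in C :|: D)
      & path (arcrel (H ++ comp_merge_arcs A H C D)) x s].
Proof.
move=> Ainj _ F hP hN [yc ->] [yd ->] hCD.
have [Fu Fr] := dfs_forest_ok A order; rewrite -/F in Fu Fr.
have hFr : forall u w, arcrel F u w -> reach1_arc A u w.
  by move=> u w h; apply: (Fr (u, w)).
have hFu : forall u u' w, arcrel F u w -> arcrel F u' w -> u = u'.
  move=> u u' w; rewrite /arcrel; elim: (F) Fu => [|e E IH] //= /andP [he hE].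
  rewrite !inE => /predU1P [e1|h1] /predU1P [e2|h2].
  - by rewrite -e1 in e2; case: e2.
  - by move: he; rewrite -e1 /=; move/negP; case; apply/mapP; exists (u', w).
  - by move: he; rewrite -e2 /=; move/negP; case; apply/mapP; exists (u, w).
  - exact: IH.
have [hinc hch] : (forall u w, arcrel H u w -> A u < A w) /\
    forall y, exists x0 s, path (arcrel H) x0 s /\ forall z, (z \in x0 :: s) = (z \in comp_of H y).
  case: (classic (all_comps_dipaths F)) => hd.
  - have eH := hP hd; split.
      by move=> u w; rewrite eH => /hFr; case/and3P.
    by move=> y; apply: comp_chain_dipath; rewrite eH.
  - have eH := hN hd; rewrite eH; split.
      by move=> u w; apply: (H_inc Ainj hFr hFu).
    by move=> y; apply: (comp_chain_merged hFr hFu).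
have [x0 [s [hs hC]]] := hch yc.
have [y0 [t [ht hD]]] := hch yd.
apply: (assemble Ainj hinc hs ht hC hD).
move=> z hz1 hz2; move/negP: hCD; apply; apply/eqP/setP => w.
have hsym := sym_connect_sym (symarc_sym H).
rewrite !inE; rewrite !inE in hz1 hz2.
by rewrite (same_connect hsym hz1) (same_connect hsym hz2).
Qed.
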